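(* (i) There is an exactly computable model — a family of binary observables $X_\epsilon\in\{-1,+1\}$ with nonzero ideal variance $v(0)>0$ and $\mathbb E[X_\epsilon]=\mu_0+\alpha\epsilon$ exactly ($\mu_0\in(-1,1)$, $\alpha\ne0$), estimated with a first-order Richardson rule with independent sampling — for which the positive crossing of the MSE difference satisfies \[ \epsilon^*(B)=\left(\frac{K_0}{\alpha^2}\right)^{1/2}B^{-1/2}+O(B^{-1}). \] (ii) There is an exactly computable deterministic-limit model — a family of binary observables $X_\epsilon\in\{-1,+1\}$ with $\mathbb E[X_\epsilon]=1-\kappa\epsilon$, $\kappa>0$, estimated with a first-order Richardson rule with scale factors $(1,a)$, $a>1$, and independent sampling — for which \[ \epsilon^*(B)=\frac{K_1}{\kappa^2}B^{-1}+O(B^{-2}). \] Thus both exponents $B^{-1/2}$ and $B^{-1}$, together with their leading constants, are attained.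
   Context: A first-order Richardson rule uses scale factors $1=\lambda_0<\lambda_1$ and coefficients $c_0,c_1$ with $c_0+c_1=1$, $c_0+c_1\lambda_1=0$ (for scales $(1,a)$: $c_0=a/(a-1)$, $c_1=-1/(a-1)$), and allocation fractions $\pi_0,\pi_1>0$ summing to $1$. With budget $B$, the unmitigated estimator is the mean of $B$ shots at noise $\epsilon$, and the ZNE estimator is $c_0\widehat\mu(\epsilon)+c_1\widehat\mu(\lambda_1\epsilon)$ with $\widehat\mu(\lambda_j\epsilon)$ the mean of $\pi_jB$ independent shots at noise $\lambda_j\epsilon$. The MSE difference is $\Delta_{\mathrm{MSE}}(\epsilon,B)=\mathrm{MSE}_{\mathrm{noisy}}-\mathrm{MSE}_{\mathrm{ZNE}}$ with $\mathrm{MSE}=\mathbb E[(\widehat\mu-\mu(0))^2]$, and $\epsilon^*(B)$ is its positive (nonzero) crossing. With $v(\epsilon)=\mathrm{Var}(X_\epsilon)$ and $v(\epsilon)=\nu\epsilon^q+\ldots$ the leading small-noise behavior, the variance-penalty constants are $K_q=\nu[\sum_jc_j^2\lambda_j^q/\pi_j-1]$; thus $K_0=v(0)[\sum_jc_j^2/\pi_j-1]$ in (i), and $K_1=2\kappa[\sum_jc_j^2\lambda_j/\pi_j-1]$ in (ii). *)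

(* Defs.v *)
From Stdlib Require Import Reals.
Open Scope R_scope.

(* First-order Richardson rule with scales (1, l), l > 1. *)
Definition rc0 (l : R) : R := l / (l - 1).
Definition rc1 (l : R) : R := - 1 / (l - 1).

(* A binary observable X_eps in {-1,+1}: its law is given by
   p eps = P(X_eps = +1), so P(X_eps = -1) = 1 - p eps. *)
Definition bmean (p : R -> R) (e : R) : R :=
  1 * p e + (-1) * (1 - p e).
Definition bvar (p : R -> R) (e : R) : R :=
  (1 - bmean p e) ^ 2 * p e + (-1 - bmean p e) ^ 2 * (1 - p e).

(* MSE of the unmitigated estimator: mean of B independent shots at noise e,
   target mu(0) = bmean p 0 (bias^2 + variance of the sample mean). *)
Definition mse_noisy (p : R -> R) (e B : R) : R :=
  (bmean p e - bmean p 0) ^ 2 + bvar p e / B.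

(* MSE of the ZNE estimator c0 muhat(e) + c1 muhat(l e), with pi0 B shots at
   noise e and (1 - pi0) B independent shots at noise l e. *)
Definition mse_zne (p : R -> R) (l pi0 e B : R) : R :=
  (rc0 l * bmean p e + rc1 l * bmean p (l * e) - bmean p 0) ^ 2
  + rc0 l ^ 2 * bvar p e / (pi0 * B)
  + rc1 l ^ 2 * bvar p (l * e) / ((1 - pi0) * B).

Definition delta_mse (p : R -> R) (l pi0 e B : R) : R :=
  mse_noisy p e B - mse_zne p l pi0 e B.

(* The model is defined for noise levels in [0, emax]; a noise level e is
   admissible for the rule when both e and l e lie in that range. *)
Definition admissible (l emax e : R) : Prop := 0 <= e /\ l * e <= emax.

Definition pos_crossing (p : R -> R) (l pi0 emax B e : R) : Prop :=
  0 < e /\ admissible l emax e /\ delta_mse p l pi0 e B = 0 /\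
  forall e', 0 < e' -> admissible l emax e' -> delta_mse p l pi0 e' B = 0 -> e' = e.

Definition K0 (p : R -> R) (l pi0 : R) : R :=
  bvar p 0 * (rc0 l ^ 2 / pi0 + rc1 l ^ 2 / (1 - pi0) - 1).
Definition K1 (kappa l pi0 : R) : R :=
  2 * kappa * (rc0 l ^ 2 * 1 / pi0 + rc1 l ^ 2 * l / (1 - pi0) - 1).

(* Main.v *)
Require Import Defs.
From Stdlib Require Import Reals Lra Psatz.
Open Scope R_scope.

Definition p1 (e : R) : R := (1 + e) / 2.
Definition p2 (e : R) : R := 1 - e / 2.

Lemma d1 e B : 0 < B -> delta_mse p1 2 (1/2) e B = (e^2 * (B + 15) - 9) / B.
Proof.
  intros HB. unfold delta_mse, mse_noisy, mse_zne, bvar, bmean, rc0, rc1, p1.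
  field. lra.
Qed.

Lemma d2 e B : 0 < B -> delta_mse p2 2 (1/2) e B = (e^2 * (B + 15) - 22 * e) / B.
Proof.
  intros HB. unfold delta_mse, mse_noisy, mse_zne, bvar, bmean, rc0, rc1, p2.
  field. lra.
Qed.

Lemma K0v : K0 p1 2 (1/2) = 9.
Proof. unfold K0, bvar, bmean, rc0, rc1, p1. field. Qed.

Lemma K1v : K1 1 2 (1/2) = 22.
Proof. unfold K1, rc0, rc1. field. Qed.

Lemma divz x B : 0 < B -> x / B = 0 -> x = 0.
Proof.
  intros HB H. assert (x = x / B * B) by (field; lra). rewrite H0, H. ring.
Qed.

Theorem proposition11 :
  (* (i) *)
  (exists (p : R -> R) (mu0 alpha l pi0 emax : R),
     -1 < mu0 < 1 /\ alpha <> 0 /\ 1 < l /\ 0 < pi0 < 1 /\ 0 < emax /\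
     (forall e, 0 <= e <= emax -> 0 <= p e <= 1 /\ bmean p e = mu0 + alpha * e) /\
     0 < bvar p 0 /\
     exists (estar : R -> R) (C B0 : R), 0 < B0 /\
       forall B, B0 <= B ->
         pos_crossing p l pi0 emax B (estar B) /\
         Rabs (estar B - sqrt (K0 p l pi0 / alpha ^ 2) * / sqrt B) <= C * / B)
  /\
  (* (ii) *)
  (exists (p : R -> R) (kappa a pi0 emax : R),
     0 < kappa /\ 1 < a /\ 0 < pi0 < 1 /\ 0 < emax /\
     (forall e, 0 <= e <= emax -> 0 <= p e <= 1 /\ bmean p e = 1 - kappa * e) /\
     exists (estar : R -> R) (C B0 : R), 0 < B0 /\
       forall B, B0 <= B ->
         pos_crossing p a pi0 emax B (estar B) /\
         Rabs (estar B - K1 kappa a pi0 / kappa ^ 2 * / B) <= C * / B ^ 2).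
Proof.
  split.
  - exists p1, 0, 1, 2, (1/2), 1.
    split; [lra|]. split; [lra|]. split; [lra|]. split; [lra|]. split; [lra|].
    split.
    { intros e He. unfold p1, bmean. split; [lra|field]. }
    split.
    { replace (bvar p1 0) with 1 by (unfold bvar, bmean, p1; field). lra. }
    exists (fun B => 3 / sqrt (B + 15)), 45, 100.
    split; [lra|]. intros B HB.
    rewrite K0v.
    assert (Hs : 0 < sqrt B) by (apply sqrt_lt_R0; lra).
    assert (Ht : 0 < sqrt (B + 15)) by (apply sqrt_lt_R0; lra).
    assert (Es : sqrt B * sqrt B = B) by (apply sqrt_sqrt; lra).
    assert (Et : sqrt (B+15) * sqrt (B+15) = B + 15) by (apply sqrt_sqrt; lra).
    set (s := sqrt B) in *. set (t := sqrt (B+15)) in *.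
    assert (Ht10 : 10 <= t) by nra.
    assert (Hst : s <= t) by nra.
    split.
    + unfold pos_crossing, admissible.
      split. { apply Rdiv_lt_0_compat; lra. }
      split. { split. { left; apply Rdiv_lt_0_compat; lra. }
               apply (Rmult_le_reg_r t); [lra|]. field_simplify; lra. }
      split. { rewrite d1 by lra. replace ((3/t)^2) with (9 / (B+15)).
               - field_simplify; lra.
               - rewrite <- Et. field. lra. }
      intros e' He' [_ Ha] Hd. rewrite d1 in Hd by lra.
      apply divz in Hd; [|lra].
      assert (Hq : (e' * t - 3) * (e' * t + 3) = 0).
      { replace ((e' * t - 3) * (e' * t + 3)) with (e'^2 * (t*t) - 9) by ring. rewrite Et. lra. }
      assert (e' * t = 3).
      { apply Rmult_integral in Hq. destruct Hq; [lra|]. nra. }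
      apply (Rmult_eq_reg_r t); [|lra]. rewrite H. field. lra.
    + replace (sqrt (9 / 1^2)) with 3.
      2:{ replace (9/1^2) with (3*3) by field. rewrite sqrt_square; lra. }
      fold s.
      assert (E : 3 / t - 3 * / s = - (3 * (t - s) / (s * t))) by (field; lra).
      rewrite E, Rabs_Ropp, Rabs_right.
      2:{ apply Rle_ge. unfold Rdiv; apply Rmult_le_pos; [nra|left; apply Rinv_0_lt_compat; nra]. }
      assert (Hts : (t - s) * (t + s) = 15) by nra.
      rewrite <- Es.
      apply (Rmult_le_reg_r (s * s * t)); [nra|].
      field_simplify; [|lra|lra].
      nra.
  - exists p2, 1, 2, (1/2), 1.
    split; [lra|]. split; [lra|]. split; [lra|]. split; [lra|].
    split.
    { intros e He. unfold p2, bmean. split; [lra|field]. }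
    exists (fun B => 22 / (B + 15)), 330, 100.
    split; [lra|]. intros B HB.
    rewrite K1v.
    split.
    + unfold pos_crossing, admissible.
      split. { apply Rdiv_lt_0_compat; lra. }
      split. { split. { left; apply Rdiv_lt_0_compat; lra. }
               apply (Rmult_le_reg_r (B+15)); [lra|]. field_simplify; lra. }
      split. { rewrite d2 by lra. field_simplify; lra. }
      intros e' He' [_ Ha] Hd. rewrite d2 in Hd by lra.
      apply divz in Hd; [|lra].
      assert (e' * (B+15) = 22) by nra.
      apply (Rmult_eq_reg_r (B+15)); [|lra]. rewrite H. field. lra.
    + assert (E : 22 / (B + 15) - 22 / 1 ^ 2 * / B = - (330 / (B * (B+15)))) by (field; lra).
      rewrite E, Rabs_Ropp, Rabs_right.
      2:{ apply Rle_ge. unfold Rdiv; apply Rmult_le_pos; [nra|left; apply Rinv_0_lt_compat; nra]. }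
      apply (Rmult_le_reg_r (B * B * (B+15))); [nra|].
      field_simplify; [|lra|lra]. nra.
Qed.
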